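(* Let $(R,\mathfrak{m})$ be a commutative Noetherian local ring of prime characteristic $p$, and suppose there is a left $R[x,f]$-module $E$ which, as an $R$-module, is isomorphic to $E_R(R/\mathfrak{m})$. Let $\widetilde{E}=\bigoplus_{n\in\mathbb{N}_0}E_n$ with each $E_n=E$, the graded left $R[x,f]$-module in which $x$ maps $e\in E_n$ to $xe\in E_{n+1}$. Let $M$ be a non-zero $R$-module of finite length whose zero submodule is irreducible (i.e. is not the intersection of two non-zero submodules). Then there exists a homogeneous $R[x,f]$-homomorphism $\lambda=\bigoplus_{i\in\mathbb{N}_0}\lambda_i:R[x,f]\otimes_RM=\bigoplus_{i\in\mathbb{N}_0}(Rx^i\otimes_RM)\to\widetilde{E}$ such that $\lambda_0$ is a monomorphism.
   Context: $R[x,f]$ denotes the Frobenius skew polynomial ring over $R$: as a left $R$-module it is free on $(x^i)_{i\in\mathbb{N}_0}$, with multiplication subject to $xr = r^px$; it is graded with $n$th component $Rx^n$, viewed as an $(R,R)$-bimodule (so $rx^i\cdot s=rs^{p^i}x^i$), and $R[x,f]\otimes_RM=\bigoplus_i(Rx^i\otimes_RM)$ is a graded left $R[x,f]$-module. $\lambda_i$ denotes the restriction of $\lambda$ to the degree-$i$ component. *)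

(* Defs.v *)
From HB Require Import structures.
From mathcomp Require Import all_boot all_order all_algebra.
Set Implicit Arguments. Unset Strict Implicit. Unset Printing Implicit Defensive.
Import Order.TTheory GRing.Theory.
Local Open Scope ring_scope.

Section Defs.
Variable R : comUnitRingType.

Definition is_ideal (I : R -> Prop) : Prop :=
  [/\ I 0, (forall a b, I a -> I b -> I (a + b)) & (forall r a, I a -> I (r * a))].

Definition fin_gen_ideal (I : R -> Prop) : Prop :=
  exists s : seq R, forall a, I a <->
    exists c : seq R, size c = size s /\ a = \sum_(k < size s) c`_k * s`_k.

Definition noetherian : Prop := forall I, is_ideal I -> fin_gen_ideal I.

Definition maximal_ideal (I : R -> Prop) : Prop :=
  [/\ is_ideal I, ~ I 1 &
     forall J, is_ideal J -> (forall a, I a -> J a) -> ~ J 1 -> forall a, J a -> I a].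

Definition local_ring (m : R -> Prop) : Prop :=
  maximal_ideal m /\ forall J, maximal_ideal J -> forall a, J a <-> m a.

Variable V : lmodType R.

Definition submod (N : V -> Prop) : Prop :=
  [/\ N 0, (forall a b, N a -> N b -> N (a + b)) & (forall r a, N a -> N (r *: a))].

Definition nonzero_sub (N : V -> Prop) : Prop := exists v, N v /\ v <> 0.

Definition ssubmod (N L : V -> Prop) : Prop :=
  (forall v, N v -> L v) /\ exists v, L v /\ ~ N v.

Definition finite_length : Prop :=
  exists (n : nat) (N : nat -> V -> Prop),
    [/\ forall k, submod (N k),
        (forall v, N 0%N v <-> v = 0),
        (forall v, N n v),
        (forall k, (k < n)%N -> ssubmod (N k) (N k.+1)) &
        (forall k, (k < n)%N -> forall L, submod L ->
             ~ (ssubmod (N k) L /\ ssubmod L (N k.+1)))].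

Definition zero_irreducible : Prop :=
  ~ exists N1 N2 : V -> Prop,
      [/\ submod N1, submod N2, nonzero_sub N1, nonzero_sub N2 &
          forall v, (N1 v /\ N2 v) <-> v = 0].

Definition injective_module : Prop :=
  forall (A B : lmodType R) (i : {linear A -> B}) (g : {linear A -> V}),
    injective i -> exists h : {linear B -> V}, forall a, h (i a) = g a.

(** V is (isomorphic to) an injective hull E_R(R/m) of R/m: V is injective
    and is an essential extension of a submodule R e isomorphic to R/m
    (i.e. with annihilator of e equal to m). *)
Definition is_injective_hull_residue (m : R -> Prop) : Prop :=
  injective_module /\
  exists e : V, (forall r, r *: e = 0 <-> m r) /\
    forall N, submod N -> nonzero_sub N ->
      exists w, [/\ N w, w <> 0 & exists s, w = s *: e].

(** A left R[x,f]-module structure on the R-module V: the action of x,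
    an additive map phi with x r = r^p x, i.e. phi (r v) = r^p phi v. *)
Definition frobenius_action (p : nat) (phi : V -> V) : Prop :=
  (forall a b, phi (a + b) = phi a + phi b) /\
  (forall r v, phi (r *: v) = r ^+ p *: phi v).

(** Formal sums of pure tensors  r x^i (x) m  and the congruence whose
    quotient is R x^i (x)_R V (R x^i with right structure
    r x^i . s = r s^(p^i) x^i). *)
Inductive tens_eq (p i : nat) : seq (R * V) -> seq (R * V) -> Prop :=
| te_refl s : tens_eq p i s s
| te_sym s t : tens_eq p i s t -> tens_eq p i t s
| te_trans s t u : tens_eq p i s t -> tens_eq p i t u -> tens_eq p i s u
| te_cat s1 t1 s2 t2 : tens_eq p i s1 t1 -> tens_eq p i s2 t2 ->
    tens_eq p i (s1 ++ s2) (t1 ++ t2)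
| te_comm s t : tens_eq p i (s ++ t) (t ++ s)
| te_zero v : tens_eq p i [:: (0, v)] [::]
| te_addl r1 r2 v : tens_eq p i [:: (r1 + r2, v)] [:: (r1, v); (r2, v)]
| te_addr r v1 v2 : tens_eq p i [:: (r, v1 + v2)] [:: (r, v1); (r, v2)]
| te_bal r s v : tens_eq p i [:: (r * s ^+ (p ^ i), v)] [:: (r, s *: v)].

End Defs.

(** A homogeneous R[x,f]-homomorphism
      lambda = (+)_i lambda_i : (+)_i (R x^i (x)_R M) -> (+)_i E,
    each lambda_i given as a map on formal sums that respects [tens_eq],
    is additive, left R-linear, and commutes with x
    (x . (r x^i (x) m) = r^p x^(i+1) (x) m, and x acts E_i -> E_(i+1) by phi). *)
Definition homog_Rxf_hom (R : comUnitRingType) (M E : lmodType R) (p : nat)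
    (phi : E -> E) (lam : nat -> seq (R * M) -> E) : Prop :=
  [/\ forall i s t, tens_eq p i s t -> lam i s = lam i t,
      forall i, lam i [::] = 0,
      forall i s t, lam i (s ++ t) = lam i s + lam i t,
      forall i (r : R) s, lam i [seq (r * q.1, q.2) | q <- s] = r *: lam i s &
      forall i s, lam i.+1 [seq (q.1 ^+ p, q.2) | q <- s] = phi (lam i s)].

Definition lam0_mono (R : comUnitRingType) (M E : lmodType R) (p : nat)
    (lam : nat -> seq (R * M) -> E) : Prop :=
  forall s, lam 0%N s = 0 -> tens_eq p 0 s [::].

(* Main.v *)
Require Import Defs.
Set Warnings "-notation-overridden,-ambiguous-paths".
From HB Require Import structures.
From mathcomp Require Import all_boot all_order all_algebra.
From Stdlib Require Import ClassicalEpsilon.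
Import GRing.Theory.
From Stdlib Require Import Classical.
Local Open Scope ring_scope.
Section Sub.
Variables (R : comUnitRingType) (M : lmodType R) (w : M).
Definition Pw (x : M) : bool :=
  if excluded_middle_informative (exists r : R, x = r *: w) then true else false.
Lemma PwP x : reflect (exists r : R, x = r *: w) (Pw x).
Proof. rewrite /Pw; case: excluded_middle_informative => H; constructor => //. Qed.
Lemma Pw_closed : subsemimod_closed Pw.
Proof.
split; [split|].
- by apply/PwP; exists 0; rewrite scale0r.
- move=> x y /PwP [a ->] /PwP [b ->]; apply/PwP; exists (a + b); by rewrite scalerDl.
- move=> a x /PwP [b ->]; apply/PwP; exists (a * b); by rewrite scalerA.
Qed.
Definition Aw := {x : M | Pw x}.
HB.instance Definition _ := [isSub of Aw for sval].
HB.instance Definition _ := [Choice of Aw by <:].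
HB.instance Definition _ := GRing.SubChoice_isSubLmodule.Build R M Pw Aw Pw_closed.
Definition iwf (x : Aw) : M := val x.
Lemma iwf_lin : linear iwf.
Proof. by []. Qed.
HB.instance Definition _ := GRing.isLinear.Build R Aw M *:%R iwf iwf_lin.
Lemma iwf_inj : injective iwf.
Proof. exact: val_inj. Qed.
Lemma exAw (x : Aw) : exists r : R, val x == r *: w.
Proof. by case/PwP: (valP x) => r ->; exists r. Qed.
Definition coef (x : Aw) : R := xchoose (exAw x).
Lemma coefP x : val x = coef x *: w.
Proof. exact/eqP/(xchooseP (exAw x)). Qed.
Variables (E : lmodType R) (e : E).
Hypothesis Hann : forall r : R, r *: w = 0 <-> r *: e = 0.
Definition gwf (_ : forall r : R, r *: w = 0 <-> r *: e = 0) (x : Aw) : E := coef x *: e.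
Lemma gwf_lin : linear (gwf Hann).
Proof.
move=> a x y; rewrite /gwf scalerA -scalerDl; apply/eqP; rewrite -subr_eq0 -scalerBl.
apply/eqP/Hann; rewrite scalerBl scalerDl -scalerA -!coefP.
have -> : val (a *: x + y) = a *: val x + val y by rewrite !SubK.
by rewrite subrr.
Qed.
HB.instance Definition _ := GRing.isLinear.Build R Aw E *:%R (gwf Hann) gwf_lin.
Lemma gwfE (r : R) (x : Aw) : val x = r *: w -> gwf Hann x = r *: e.
Proof.
move=> h; rewrite /gwf; apply/eqP; rewrite -subr_eq0 -scalerBl; apply/eqP/Hann.
by rewrite scalerBl -coefP h subrr.
Qed.
End Sub.

Lemma te_cast (R : comUnitRingType) (V : lmodType R) p i (s t s' t' : seq (R * V)) :
  tens_eq p i s t -> s = s' -> t = t' -> tens_eq p i s' t'.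
Proof. by move=> h <- <-. Qed.

Lemma te_one0 (R : comUnitRingType) (V : lmodType R) p :
  tens_eq p 0 [:: ((1 : R), (0 : V))] [::].
Proof.
apply: (@te_trans _ _ p 0 _ [:: (0, 0)]).
  apply: te_sym; apply: te_cast (te_bal p 0 1 0 0) _ _.
    by rewrite expn0 expr1 mul1r.
  by rewrite scale0r.
exact: te_zero.
Qed.

Lemma te_collect (R : comUnitRingType) (V : lmodType R) p (s : seq (R * V)) :
  tens_eq p 0 s [:: (1, \sum_(q <- s) q.1 *: q.2)].
Proof.
elim: s => [|[a v] s IH].
  rewrite big_nil; apply: te_sym; exact: te_one0.
rewrite big_cons /=.
apply: (@te_trans _ _ p 0 _ ([:: (1, a *: v)] ++ [:: (1, \sum_(q <- s) q.1 *: q.2)])).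
  apply: (@te_cat _ _ p 0 [:: (a, v)] _ s) => //.
  by apply: te_cast (te_bal p 0 1 a v) _ _; rewrite // expn0 expr1 mul1r.
apply: te_sym; exact: te_addr.
Qed.

Lemma embed (R : comUnitRingType) (m : R -> Prop) (E M : lmodType R) :
  local_ring m -> is_injective_hull_residue E m ->
  (exists v : M, v <> 0) -> finite_length M -> zero_irreducible M ->
  exists h : {linear M -> E}, injective h.
Proof.
move=> hloc [Einj [e [he _]]] [v0 v00] [n [N [Nsub N0 Nn Nss Nsimple]]] hirr.
have n0 : (0 < n)%N.
  case: n Nn Nss Nsimple => // Nn _ _; exfalso; apply: v00; exact/N0/Nn.
case: (Nss 0%N n0) => _ [w [N1w nN0w]].
have w0 : w <> 0 by move=> w0; apply: nN0w; apply/N0.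
have simp : forall a : R, a *: w <> 0 -> exists b, b *: (a *: w) = w.
  move=> a aw0; apply: NNPP => nex.
  apply: (Nsimple 0%N n0 (fun x => exists b, x = b *: (a *: w))).
    split.
    - by exists 0; rewrite scale0r.
    - by move=> x y [b1 ->] [b2 ->]; exists (b1 + b2); rewrite scalerDl.
    - by move=> r x [b ->]; exists (r * b); rewrite -scalerA.
  split; split.
  - by move=> x /N0 ->; exists 0; rewrite scale0r.
  - exists (a *: w); split; first by exists 1; rewrite scale1r.
    by move/N0.
  - move=> x [b ->]; have [_ _ Zs] := Nsub 1%N; apply: (Zs); apply: (Zs); exact: N1w.
  - exists w; split => // -[b hb]; apply: nex; exists b; by rewrite -hb.
have annmax : maximal_ideal (fun r : R => r *: w = 0).
  split.
  - split.
    + by rewrite scale0r.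
    + by move=> a b ha hb; rewrite scalerDl ha hb addr0.
    + by move=> r a ha; rewrite -scalerA ha scaler0.
  - by rewrite scale1r.
  - move=> J [J0 JD JM] sub nJ1 a Ja; apply: NNPP => aw0.
    have [b hb] := simp a aw0; apply: nJ1.
    have h1 : J (1 - b * a) by apply: sub; rewrite scalerBl scale1r -scalerA hb subrr.
    by have := JD _ _ h1 (JM b a Ja); rewrite subrK.
have annm : forall r, r *: w = 0 <-> m r := (proj2 hloc _ annmax).
have Hann : forall r : R, r *: w = 0 <-> r *: e = 0.
  by move=> r; rewrite annm he.
have [h hh] := Einj (Aw R M w) M (iwf R M w) (gwf R M w E e Hann) (@iwf_inj R M w).
have hrw : forall r, h (r *: w) = r *: e.
  move=> r; have Pr : Pw R M w (r *: w) by apply/PwP; exists r.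
  have := hh (exist _ (r *: w) Pr); rewrite /iwf /= => ->.
  exact: gwfE.
have hD : forall a b, h (a + b) = h a + h b by move=> a b; exact: raddfD.
have hB : forall a b, h (a - b) = h a - h b by move=> a b; exact: raddfB.
have hZ : forall (r : R) a, h (r *: a) = r *: h a by move=> r a; exact: linearZ.
have h0 : h 0 = 0 by exact: raddf0.
exists h => x y hxy; apply/eqP; rewrite -subr_eq0; apply/eqP.
have hz : h (x - y) = 0 by rewrite hB hxy subrr.
move: (x - y) hz => z hz; apply: NNPP => z0; apply: hirr.
exists (fun v => h v = 0), (fun v => exists r, v = r *: w); split.
- split.
  + exact: h0.
  + by move=> a b ha hb; rewrite hD ha hb addr0.
  + by move=> r a ha; rewrite hZ ha scaler0.
- split.
  + by exists 0; rewrite scale0r.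
  + by move=> a b [r1 ->] [r2 ->]; exists (r1 + r2); rewrite scalerDl.
  + by move=> r a [b ->]; exists (r * b); rewrite scalerA.
- by exists z.
- by exists w; split => //; exists 1; rewrite scale1r.
- move=> v; split.
    by move=> [hv [r vr]]; move: hv; rewrite vr hrw => /Hann.
  move=> ->; split; [exact: h0 | by exists 0; rewrite scale0r].
Qed.

Theorem lemma3p1 (R : comUnitRingType) (m : R -> Prop) (p : nat)
  (E : lmodType R) (phi : E -> E) (M : lmodType R) :
  noetherian R -> local_ring m -> p \in [pchar R] ->
  @frobenius_action R E p phi ->
  is_injective_hull_residue E m ->
  (exists v : M, v <> 0) -> finite_length M -> zero_irreducible M ->
  exists lam : nat -> seq (R * M) -> E,
    homog_Rxf_hom p phi lam /\ lam0_mono p lam.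
Proof.
move=> _ hloc _ [phiD phiZ] hE hv hfl hirr.
have [h hinj] := @embed R m E M hloc hE hv hfl hirr.
have hD : forall a b, h (a + b) = h a + h b by move=> a b; exact: raddfD.
have hZ : forall (r : R) a, h (r *: a) = r *: h a by move=> r a; exact: linearZ.
have h0 : h 0 = 0 by exact: raddf0.
have phi0 : phi 0 = 0.
  have H := phiD 0 0; rewrite addr0 in H.
  by apply: (@addrI _ (phi 0)); rewrite addr0 -H.
have iterD : forall i a b, iter i phi (a + b) = iter i phi a + iter i phi b.
  by elim=> //= i IH a b; rewrite IH phiD.
have iterZ : forall i r v, iter i phi (r *: v) = r ^+ (p ^ i) *: iter i phi v.
  elim=> [|i IH] r v /=; first by rewrite expn0 expr1.
  by rewrite IH phiZ -exprM expnS mulnC.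
pose lam i (s : seq (R * M)) := \sum_(q <- s) q.1 *: iter i phi (h q.2).
exists lam; split; [split|].
- move=> i s t; elim=> {s t}.
  + by [].
  + by move=> s t _ ->.
  + by move=> s t u _ -> _ ->.
  + by move=> s1 t1 s2 t2 _ h1 _ h2; rewrite /lam !big_cat -/(lam i s1) -/(lam i s2) h1 h2.
  + by move=> s t; rewrite /lam !big_cat; exact: addrC.
  + by move=> v; rewrite /lam big_cons big_nil scale0r addr0.
  + by move=> r1 r2 v; rewrite /lam !big_cons big_nil /= scalerDl !addr0.
  + by move=> r v1 v2; rewrite /lam !big_cons big_nil /= hD iterD scalerDr !addr0.
  + by move=> r s v; rewrite /lam !big_cons big_nil /= hZ iterZ scalerA.
- by move=> i; rewrite /lam big_nil.
- by move=> i s t; rewrite /lam big_cat.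
- move=> i r s; rewrite /lam big_map scaler_sumr; apply: eq_bigr => q _.
  by rewrite scalerA.
- move=> i s; rewrite /lam big_map (big_morph phi phiD phi0); apply: eq_bigr => q _.
  by rewrite /= phiZ.
- move=> s hs.
  have hsum : \sum_(q <- s) q.1 *: q.2 = 0.
    apply: hinj; rewrite h0 -hs /lam (big_morph h hD h0); apply: eq_bigr => q _.
    by rewrite hZ.
  apply: (@te_trans _ _ p 0 _ _ _ (@te_collect _ _ p s)); rewrite hsum; exact: te_one0.
Qed.
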